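(* In the RSP setting described in the context, let $b\in\mathbb{N}^+$ with $b\le n$, and let $i^*$ be the smallest integer $i\ge0$ with $C_{\mathrm{opt}}(G^-_{S_i})>b$. Then $i^*\le\lceil\log_2 n\rceil$.
   Context: RSP setting: $G=(V,E,c,r)$ is a weakly connected directed graph with $n=|V|$, $m=|E|$, $c,r:E\to\mathbb{R}_{\ge0}$, vertices $s\ne t$, bound $R\ge 0$. Paths are edge sets; $P_v$ = set of paths from $s$ to $v$; $C_G(p)=\sum_{e\in p}c(e)$, $R_G(p)=\sum_{e\in p}r(e)$; $C_{\mathrm{opt}}(G)=\min\{C_G(p):p\in P_t,\ R_G(p)\le R\}$. It is assumed that a path $p\in P_t$ with $R_G(p)\le R$ exists and that $C_{\mathrm{opt}}(G)>0$. For $S>0$, $G^-_S=(V,E,c^-_S,r)$ with $c^-_S(e)=\lfloor c(e)/S\rfloor$ (same $s,t,R$). Bounds $L,U$: sort the edges $e_1,\dots,e_m$ ascending by cost; let $j^*$ be the smallest $j$ such that some $p\in P_t$ with $R_G(p)\le R$ uses only edges from $\{e_1,\dots,e_j\}$; set $L=c(e_{j^*})$ and $U=nL$ (so $L\le C_{\mathrm{opt}}(G)\le U$). Scaling factors: $S_i=2^{-i}U/(2n)$ for $i\in\mathbb{N}_0$. *)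

(* Defs.v *)
From HB Require Import structures.
From mathcomp Require Import all_boot all_order all_algebra.
From mathcomp Require Import boolp reals.
Set Implicit Arguments. Unset Strict Implicit. Unset Printing Implicit Defensive.
Import Order.TTheory GRing.Theory Num.Theory.
Local Open Scope ring_scope.

Definition weakly_connected (V : finType) (E : {set V * V}) : Prop :=
  forall x y : V, connect (fun u w => ((u, w) \in E) || ((w, u) \in E)) x y.

Definition edge_path (V : finType) (E : {set V * V}) (s v : V) (p : {set V * V})
  : Prop :=
  exists vs : seq V,
    [/\ uniq (s :: vs), last s vs = v,
        all (fun e => e \in E) (zip (s :: vs) vs)
      & p = [set e | e \in zip (s :: vs) vs]].

Definition pcost (V : finType) (K : numDomainType) (c : V * V -> K)
  (p : {set V * V}) : K := \sum_(e in p) c e.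

Definition feasible (V : finType) (K : numDomainType) (E : {set V * V})
  (r : V * V -> K) (s t : V) (Rb : K) (p : {set V * V}) : Prop :=
  edge_path E s t p /\ pcost r p <= Rb.

(* C_opt(G) = min { C_G(p) : p feasible }  (0 if no feasible path exists,
   a case excluded by the standing assumptions). *)
Definition Copt (V : finType) (K : realType) (E : {set V * V})
  (c r : V * V -> K) (s t : V) (Rb : K) : K :=
  match [pick p : {set V * V} | `[< feasible E r s t Rb p >]] with
  | Some p0 => \big[Num.min/ pcost c p0]_(p : {set V * V} | `[< feasible E r s t Rb p >])
                 pcost c p
  | None => 0
  end.

Definition scaled_cost (V : finType) (K : realType) (c : V * V -> K) (S : K)
  : V * V -> K := fun e => (Num.floor (c e / S))%:~R.

(* Main.v *)
Require Import Defs.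
From HB Require Import structures.
From mathcomp Require Import all_boot all_order all_algebra.
From mathcomp Require Import boolp reals.
From mathcomp Require Import ring lra zify.
Import Order.TTheory GRing.Theory Num.Theory.
Local Open Scope ring_scope.

Lemma Copt_le {K : realType} {V : finType} {E : {set V * V}}
  (c : V * V -> K) {r : V * V -> K} {s t : V} {Rb : K} {p} :
  feasible E r s t Rb p -> Copt E c r s t Rb <= pcost c p.
Proof.
move=> Hp; rewrite /Copt; case: pickP => [p0 _|H].
  by apply: bigmin_le_cond; apply/asboolP.
by move: (H p); rewrite (asboolT Hp).
Qed.

Lemma Copt_gt {K : realType} {V : finType} {E : {set V * V}}
  (c : V * V -> K) {r : V * V -> K} {s t : V} {Rb : K} {x : K} :
  (exists p, feasible E r s t Rb p) ->
  (forall p, feasible E r s t Rb p -> x < pcost c p) ->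
  x < Copt E c r s t Rb.
Proof.
move=> [q Hq] H; rewrite /Copt; case: pickP => [p0 Hp0|H0].
  apply: lt_bigmin; first by apply: H; apply/asboolP.
  by move=> p /asboolP; apply: H.
by move: (H0 q); rewrite (asboolT Hq).
Qed.

Lemma feas_props {K : realType} {V : finType} {E : {set V * V}}
  {r : V * V -> K} {s t : V} {Rb : K} {p} :
  s != t -> feasible E r s t Rb p -> p \subset E /\ p != set0.
Proof.
move=> st [[vs [_ Hl Hall ->]] _]; split.
  apply/subsetP => e; rewrite inE => He.
  by move/allP: Hall => /(_ e He).
case: vs Hl Hall => [/= Hst|v vs _ _].
  by rewrite Hst eqxx in st.
by apply/set0Pn; exists (s, v); rewrite inE /= in_cons eqxx.
Qed.

Theorem lemma10 (K : realType) (V : finType) (E : {set V * V})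
  (c r : V * V -> K) (s t : V) (Rb : K)
  (es : seq (V * V)) (jstar : nat) (b : nat) :
  weakly_connected E ->
  (forall e, e \in E -> 0 <= c e) ->
  (forall e, e \in E -> 0 <= r e) ->
  s != t -> 0 <= Rb ->
  (exists p, feasible E r s t Rb p) ->
  0 < Copt E c r s t Rb ->
  (* e_1, ..., e_m : the edges sorted ascending by cost *)
  perm_eq es (enum E) ->
  sorted (fun e f => c e <= c f) es ->
  (* j* : smallest j such that a feasible path uses only e_1, ..., e_j *)
  (exists p, feasible E r s t Rb p /\ p \subset [set e | e \in take jstar es]) ->
  (forall j, (j < jstar)%N ->
     ~ exists p, feasible E r s t Rb p /\ p \subset [set e | e \in take j es]) ->
  (0 < b)%N -> (b <= #|V|)%N ->
  let n := #|V| in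
  let L := c (nth (s, s) es jstar.-1) in   (* L = c(e_{j*}) *)
  let U := n%:R * L in
  let S (i : nat) := U / (2 * n%:R) / 2 ^+ i in
  exists istar : nat,
    [/\ b%:R < Copt E (scaled_cost c (S istar)) r s t Rb,
        (forall i, (i < istar)%N -> ~ (b%:R < Copt E (scaled_cost c (S i)) r s t Rb))
      & (istar <= up_log 2 n)%N].
Proof.
move=> _ c0 _ st _ exF Cpos Hperm Hsort [ps [Fps Sps]] Hmin b0 bn n L U S.
have trans : transitive (fun e f : V * V => c e <= c f).
  by move=> y x z /= h1 h2; apply: le_trans h1 h2.
have refl : reflexive (fun e f : V * V => c e <= c f) by move=> x /=.
have inEes e : e \in E -> e \in es by move=> eE; rewrite (perm_mem Hperm) mem_enum.
have [psE psN] := feas_props st Fps.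
have j0 : (0 < jstar)%N.
  case: jstar Sps {Hmin L S U} => // /=; rewrite take0 => Sps.
  case/set0Pn: psN => e eps; move/subsetP: Sps => /(_ e eps); by rewrite inE.
have jsz : (jstar <= size es)%N.
  rewrite leqNgt; apply/negP => H; apply: (Hmin _ H); exists ps; split => //.
  by rewrite take_size; rewrite take_oversize // ltnW in Sps.
have jm1 : (jstar.-1 < size es)%N by rewrite prednK.
have leL e : e \in take jstar es -> c e <= L.
  move=> et; have ees : e \in es by apply: mem_take et.
  have ix : (index e (take jstar es) < jstar)%N.
    have := et; rewrite -index_mem size_take_min => h.
    by apply: (leq_trans h); rewrite geq_minl.
  rewrite -(nth_index (s, s) et) nth_take //.
  apply: (sorted_leq_nth trans refl) => //; rewrite ?inE.
  - by apply: (leq_trans ix).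
  - by rewrite -ltnS prednK.
have bigE p : feasible E r s t Rb p -> exists2 e, e \in p & L <= c e.
  move=> Fp; have [pE pN] := feas_props st Fp.
  case: (boolP [exists e in p, L <= c e]) => [/existsP [e /andP [ep Le]]|H].
    by exists e.
  exfalso; apply: (Hmin jstar.-1); first by rewrite prednK.
  exists p; split => //; apply/subsetP => e ep; rewrite inE.
  have cL : c e < L.
    rewrite ltNge; apply/negP => Le; move/existsP: H; apply; exists e; by rewrite ep.
  have ees : e \in es by apply: inEes; move/subsetP: pE; apply.
  have ix := ees; rewrite -index_mem in ix.
  case: (leqP jstar.-1 (index e es)) => hi.
    have := sorted_leq_nth trans refl (s, s) Hsort; move=> /(_ _ _ _ _ hi).
    rewrite !inE nth_index // => /(_ jm1 ix) => h.
    by move: cL; rewrite ltNge h.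
  rewrite -(nth_index (s, s) ees) -(nth_take _ hi); apply: mem_nth.
  by rewrite size_take_min leq_min hi ix.
have Lpos : 0 < L.
  rewrite ltNge; apply/negP => L0.
  have : Copt E c r s t Rb <= 0.
    apply: (le_trans (Copt_le c Fps)); rewrite /pcost.
    apply: sumr_le0 => e eps; apply: (le_trans _ L0); apply: leL.
    by move/subsetP: Sps => /(_ e eps); rewrite inE.
  by rewrite leNgt Cpos.
have n0 : (0 < n)%N by rewrite /n; apply/card_gt0P; exists s.
set k := up_log 2 n.
have nk : (n <= 2 ^ k)%N by apply: up_logP.
have Sk : S k = L / (2 * 2 ^+ k).
  rewrite /S /U; field.
  all: try (rewrite ?mulf_neq0 ?pnatr_eq0 -?lt0n ?n0 ?gt_eqF ?exprn_gt0 ?ltr0n //).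
have Skpos : 0 < S k by rewrite Sk divr_gt0 // mulr_gt0 // exprn_gt0.
have Pk : b%:R < Copt E (scaled_cost c (S k)) r s t Rb.
  apply: Copt_gt => // p Fp.
  have [pE _] := feas_props st Fp.
  have [e ep Le] := bigE p Fp.
  rewrite /pcost (bigD1 e) //=.
  have ge0 : 0 <= \sum_(i in p | i != e) scaled_cost c (S k) i.
    apply: sumr_ge0 => i /andP [ip _]; rewrite /scaled_cost ler0z floor_ge0.
    by rewrite divr_ge0 ?(ltW Skpos) // c0 //; move/subsetP: pE; apply.
  rewrite -[X in X < _]addr0; apply: ltr_leD => //.
  rewrite /scaled_cost.
  have Hx : (b + 1)%:R <= c e / S k.
    have Bn : ((b + 1)%:R : K) <= 2 * 2 ^+ k.
      have h : (b + 1 <= 2 * 2 ^ k)%N.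
        rewrite mul2n -addnn; apply: leq_add; [exact: leq_trans bn nk | exact: expn_gt0].
      by rewrite -(ler_nat K) natrM natrX in h.
    rewrite ler_pdivlMr // Sk.
    have q0 : 0 < L / (2 * 2 ^+ k) by rewrite -Sk.
    have qL : 2 * 2 ^+ k * (L / (2 * 2 ^+ k)) = L.
      by field; rewrite ?mulf_neq0 ?gt_eqF ?exprn_gt0.
    move: q0 qL Bn Le; set q := L / _; set T := 2 * _; set B := (b + 1)%:R.
    move=> q0 qL Bn Le; nra.
  have -> : (b%:R : K) = (b%:Z)%:~R by [].
  rewrite ltr_int ltNge; apply/negP => h.
  have h2 : (Num.floor (c e / S k) < (b + 1)%N%:Z)%R.
    by rewrite PoszD; apply: (le_lt_trans h); rewrite ltrDl.
  by move: h2; rewrite floor_lt_int ltNge Hx.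
have exP : exists i, `[< b%:R < Copt E (scaled_cost c (S i)) r s t Rb >] by exists k; apply/asboolP.
case: (ex_minnP exP) => m /asboolP Pm minm.
exists m; split => //.
  move=> i im Pi; have := minm i (asboolT Pi); by rewrite leqNgt im.
by apply: minm; apply/asboolP.
Qed.
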